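(* For any ultrafilter $x\in I$, there exists a sequence $\langle x_n:n\in\mathbb{N}\rangle$ of ultrafilters with $x_n\in\overline{L_n}$ for each $n$, such that $x_1\,\tilde{\mid}\,x_2\,\tilde{\mid}\,\cdots$ and $x_n\,\tilde{\mid}\,x$ for every $n$.
   Context: $\mathbb{N}=\{1,2,3,\dots\}$; $\beta\mathbb{N}$ is the set of ultrafilters on $\mathbb{N}$. For $A\subseteq\mathbb{N}$, $\overline{A}=\{x\in\beta\mathbb{N}:A\in x\}$. $P$ is the set of primes, $L_0=\{1\}$, $L_n=\{a_1\cdots a_n:a_i\in P\}$. $I=\bigcap_{i=0}^\infty\overline{\mathbb{N}\setminus L_i}$ (ultrafilters containing none of the $L_i$). For $x,y\in\beta\mathbb{N}$, $x\,\tilde{\mid}\,y$ iff for every $A\in x$ the set $\{k\in\mathbb{N}:\exists a\in A,\ a\mid k\}$ belongs to $y$. *)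

(* Defs.v *)
(* Ultrafilters on N = {1,2,3,...} are
   represented as families of subsets (predicates nat -> Prop) of nat that
   contain the set of positive naturals; A \in x is written x A. *)
From mathcomp Require Import all_boot.
Set Implicit Arguments. Unset Strict Implicit. Unset Printing Implicit Defensive.

Definition Npos : nat -> Prop := fun n => 0 < n.

Definition is_ultrafilter (x : (nat -> Prop) -> Prop) : Prop :=
  [/\ x Npos,
      ~ x (fun _ => False),
      (forall A B : nat -> Prop, x A -> (forall n, A n -> B n) -> x B),
      (forall A B : nat -> Prop, x A -> x B -> x (fun n => A n /\ B n))
    & (forall A : nat -> Prop, x A \/ x (fun n => ~ A n))].

Definition L (n : nat) : nat -> Prop :=
  fun k => exists s : seq nat, [/\ size s = n, all prime s & k = \prod_(p <- s) p].

Definition in_I (x : (nat -> Prop) -> Prop) : Prop :=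
  is_ultrafilter x /\ forall i, ~ x (L i).

Definition divup (A : nat -> Prop) : nat -> Prop :=
  fun k => 0 < k /\ exists a, [/\ 0 < a, A a & a %| k].

Definition tdiv (x y : (nat -> Prop) -> Prop) : Prop :=
  forall A : nat -> Prop, x A -> y (divup A).

(* Main.v *)
Require Import Defs.
From mathcomp Require Import all_boot.

Definition fac (k : nat) : seq nat :=
  flatten [seq nseq f.2 f.1 | f <- prime_decomp k].

Lemma prod_nseq e q : \prod_(p <- nseq e q) p = q ^ e.
Proof. elim: e => [|e IH]; first by rewrite big_nil. by rewrite /= big_cons IH expnS. Qed.

Lemma fac_prime k : all prime (fac k).
Proof.
apply/allP => p; rewrite /fac => /flattenP [r /mapP [[q e] Hq ->]] /nseqP [-> _].
by case: (mem_prime_decomp Hq).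
Qed.

Lemma fac_prod k : 0 < k -> k = \prod_(p <- fac k) p.
Proof.
move=> k0; rewrite /fac big_flatten big_map {1}(prod_prime_decomp k0).
by apply: eq_bigr => f _; rewrite prod_nseq.
Qed.

Lemma prod_prime_gt0 s : all prime s -> 0 < \prod_(p <- s) p.
Proof.
elim: s => [|a s IH]; first by rewrite big_nil.
by rewrite /= big_cons => /andP [pa ps]; rewrite muln_gt0 prime_gt0 // IH.
Qed.

Lemma prod_take_dvd (t : seq nat) n : \prod_(p <- take n t) p %| \prod_(p <- t) p.
Proof. by rewrite -{2}(cat_take_drop n t) big_cat /= dvdn_mulr. Qed.

Lemma all_take_prime n s : all prime s -> all prime (take n s).
Proof. move=> /allP H; apply/allP => p /mem_take; exact: H. Qed.

Definition fn (n k : nat) : nat := \prod_(p <- take n (fac k)) p.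

Lemma fn_gt0 n k : 0 < fn n k.
Proof. apply: prod_prime_gt0; apply: all_take_prime; exact: fac_prime. Qed.

Lemma fn_dvd n k : 0 < k -> fn n k %| k.
Proof. move=> k0; rewrite {2}(fac_prod k k0); exact: prod_take_dvd. Qed.

Lemma fn_dvdS n k : fn n k %| fn n.+1 k.
Proof.
rewrite /fn -(take_takel (fac k) (leqnSn n)); exact: prod_take_dvd.
Qed.

Theorem corollary3p6 (x : (nat -> Prop) -> Prop) :
  in_I x ->
  exists xs : nat -> ((nat -> Prop) -> Prop),
    (forall n, 0 < n -> is_ultrafilter (xs n) /\ xs n (L n)) /\
    (forall n, 0 < n -> tdiv (xs n) (xs n.+1)) /\
    (forall n, 0 < n -> tdiv (xs n) x).
Proof.
move=> [[xN xF xM xI xU] xL].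
have xnL : forall i, x (fun k => ~ L i k).
  by move=> i; case: (xU (L i)) => // /xL.
have G : forall n, x (fun k => 0 < k /\ forall i, i < n -> ~ L i k).
  elim=> [|n IH].
    by apply: (xM _ _ xN) => k k0; split.
  apply: (xM _ _ (xI _ _ IH (xnL n))) => k [[k0 H] Hn]; split => // i.
  rewrite ltnS leq_eqVlt => /orP [/eqP -> //|]; exact: H.
exists (fun n A => x (fun k => A (fn n k))).
split; [|split].
- move=> n _; split; first split.
  + by apply: (xM _ _ xN) => k _; apply: fn_gt0.
  + exact: xF.
  + by move=> A B HA HAB; apply: (xM _ _ HA) => k; apply: HAB.
  + by move=> A B HA HB; apply: (xI _ _ HA HB).
  + by move=> A; apply: xU.
  + apply: (xM _ _ (G n)) => k [k0 H].
    exists (take n (fac k)); split => //; last by apply: all_take_prime; exact: fac_prime.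
    apply: size_takel; rewrite leqNgt; apply/negP => Hlt.
    apply: (H _ Hlt); exists (fac k); split => //; [exact: fac_prime | exact: fac_prod].
- move=> n _ A HA; apply: (xM _ _ HA) => k Ak; split; first exact: fn_gt0.
  by exists (fn n k); split => //; [exact: fn_gt0 | exact: fn_dvdS].
- move=> n _ A HA; apply: (xM _ _ (xI _ _ HA xN)) => k [Ak k0]; split => //.
  by exists (fn n k); split => //; [exact: fn_gt0 | exact: fn_dvd].
Qed.
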